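(* For every $n\ge1$ let $f(n)$ be the minimum of $\Phi(T)$ over all binary phylogenetic trees $T$ with $n$ leaves. Then $f(1)=f(2)=0$ and, for every $n\ge 3$, $$f(n)=f(\lceil n/2\rceil)+f(\lfloor n/2\rfloor)+\binom{\lceil n/2\rceil}{2}+\binom{\lfloor n/2\rfloor}{2}.$$
   Context: A phylogenetic tree with $n$ leaves is a rooted tree whose leaves are bijectively labeled by $\{1,\dots,n\}$; binary means every internal node has exactly two children (the one-leaf tree is a single node). The depth $\delta_T(v)$ is the number of arcs from the root to $v$; for leaves $i,j$, $\varphi_T(i,j)=\delta_T(LCA_T(i,j))$ ($LCA$ = lowest common ancestor), and $\Phi(T)=\sum_{1\le i<j\le n}\varphi_T(i,j)$ is the total cophenetic index. *)

(* Defs.v *)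
From mathcomp Require Import all_boot.
Set Implicit Arguments. Unset Strict Implicit. Unset Printing Implicit Defensive.

Inductive btree : Type :=
| Leaf of nat
| Node of btree & btree.

Fixpoint leaves (T : btree) : seq nat :=
  match T with
  | Leaf l => [:: l]
  | Node L R => leaves L ++ leaves R
  end.

Definition binary_phylo (n : nat) (T : btree) : Prop :=
  perm_eq (leaves T) (iota 1 n).

(* phi T i j = depth (number of arcs from the root) of LCA_T(i,j). *)
Fixpoint phi (T : btree) (i j : nat) : nat :=
  match T with
  | Leaf _ => 0
  | Node L R =>
      if (i \in leaves L) && (j \in leaves L) then (phi L i j).+1
      else if (i \in leaves R) && (j \in leaves R) then (phi R i j).+1
      else 0
  end.

Definition Phi (T : btree) : nat :=
  let n := size (leaves T) in
  \sum_(1 <= i < n.+1) \sum_(i.+1 <= j < n.+1) phi T i j.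

Definition is_min_Phi (n m : nat) : Prop :=
  (exists T, binary_phylo n T /\ Phi T = m) /\
  (forall T, binary_phylo n T -> m <= Phi T).

(* Main.v *)
Require Import Defs.
From mathcomp Require Import all_boot zify.

Lemma hfacts n : uphalf n = n./2 + odd n /\ n = n./2 + n./2 + odd n /\ (odd n : nat) <= 1.
Proof.
have h1 := uphalf_half n. have h2 := odd_double_half n.
rewrite -addnn in h2. case: (odd n) h1 h2 => /= h1 h2; lia.
Qed.

Fixpoint gf k n := if k is k'.+1 then
  (if n <= 1 then 0 else gf k' (uphalf n) + gf k' n./2 + 'C(uphalf n, 2) + 'C(n./2, 2))
  else 0.
Definition g n := gf n n.

Lemma gf_indep k1 k2 n : n <= k1 -> n <= k2 -> gf k1 n = gf k2 n.
Proof.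
elim: k1 k2 n => [|k1 IH] [|k2] n /= h1 h2.
- by [].
- by have -> : n = 0 by lia.
- by have -> : n = 0 by lia.
- case: ifP => // hn. have [a [b c]] := hfacts n.
  rewrite (IH k2 (uphalf n)); try lia. rewrite (IH k2 n./2); lia.
Qed.

Lemma g_eq n : 2 <= n -> g n = g (uphalf n) + g n./2 + 'C(uphalf n, 2) + 'C(n./2, 2).
Proof.
move=> hn. rewrite /g. case: n hn => [|n] hn //=.
have -> : (n.+1 <= 1) = false by lia.
have [a [b c]] := hfacts n.+1.
rewrite (@gf_indep n (uphalf n.+1) (uphalf n.+1)); [|lia|lia].
rewrite (@gf_indep n n.+1./2 n.+1./2); [by []|lia|lia].
Qed.

Lemma g1 : g 1 = 0. Proof. by []. Qed.
Lemma g2 : g 2 = 0. Proof. by []. Qed.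

Lemma bin2S k : 'C(k.+1, 2) = 'C(k, 2) + k.
Proof. by rewrite binS bin1. Qed.

Lemma g_even k : 1 <= k -> g (k + k) = g k + g k + 'C(k,2) + 'C(k,2).
Proof.
move=> hk; rewrite g_eq; last lia.
have [a [b c]] := hfacts (k + k).
have e : (k+k)./2 = k by rewrite addnn doubleK.
have e2 : uphalf (k+k) = k by lia.
by rewrite e e2.
Qed.

Lemma g_odd k : 1 <= k -> g (k + k).+1 = g k.+1 + g k + 'C(k.+1,2) + 'C(k,2).
Proof.
move=> hk; rewrite g_eq; last lia.
have [a [b c]] := hfacts (k + k).+1.
have e : (k+k).+1./2 = k by lia.
have e2 : uphalf (k+k).+1 = k.+1 by lia.
by rewrite e e2.
Qed.

Lemma g_conv n : 1 <= n -> 2 * g n.+1 <= g n + g n.+2.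
Proof.
elim/ltn_ind: n => n IH hn.
have [a [b c]] := hfacts n.
case: (odd n) b => /= b.
-
  set k := n./2 in b.
  case: (posnP k) => hk.
  + have -> : n = 1 by lia. by [].
  have En : n = (k + k).+1 by lia.
  have E1 : n.+1 = (k.+1 + k.+1) by lia.
  have E2 : n.+2 = (k.+1 + k.+1).+1 by lia.
  have A0 : g n = g k.+1 + g k + 'C(k.+1,2) + 'C(k,2) by rewrite En g_odd.
  have A1 : g n.+1 = g k.+1 + g k.+1 + 'C(k.+1,2) + 'C(k.+1,2) by rewrite E1 g_even.
  have A2 : g n.+2 = g k.+2 + g k.+1 + 'C(k.+2,2) + 'C(k.+1,2) by rewrite E2 g_odd.
  rewrite A0 A1 A2.
  have := IH k ltac:(lia) ltac:(lia).
  rewrite !bin2S. lia.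
- set k := n./2 in b.
  have En : n = k + k by lia.
  have E1 : n.+1 = (k + k).+1 by lia.
  have E2 : n.+2 = (k.+1 + k.+1) by lia.
  have A0 : g n = g k + g k + 'C(k,2) + 'C(k,2) by rewrite En g_even //; lia.
  have A1 : g n.+1 = g k.+1 + g k + 'C(k.+1,2) + 'C(k,2) by rewrite E1 g_odd //; lia.
  have A2 : g n.+2 = g k.+1 + g k.+1 + 'C(k.+1,2) + 'C(k.+1,2) by rewrite E2 g_even.
  rewrite A0 A1 A2.
  rewrite !bin2S. lia.
Qed.

Definition H n := g n + 'C(n, 2).

Lemma H_conv n : 1 <= n -> 2 * H n.+1 <= H n + H n.+2.
Proof. move=> hn; have := g_conv n hn; rewrite /H !bin2S; lia. Qed.

Lemma H_mono a m : 1 <= a -> H a.+1 + H (a + m) <= H a + H (a + m).+1.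
Proof.
move=> ha; elim: m => [|m IH]; first by rewrite addn0; lia.
have := H_conv (a + m) ltac:(lia).
rewrite addnS. lia.
Qed.

Lemma balance_aux d a b : b - a <= d -> a <= b -> 1 <= a ->
  H (uphalf (a + b)) + H (a + b)./2 <= H a + H b.
Proof.
elim: d a b => [|d IH] a b hd hab ha.
- have [x [y z]] := hfacts (a + b).
  have e1 : uphalf (a + b) = b by lia. have e2 : (a + b)./2 = a by lia.
  by rewrite e1 e2 addnC.
- case: (leqP b a.+1) => hb.
  + have [x [y z]] := hfacts (a + b).
    have e1 : uphalf (a + b) = b by lia. have e2 : (a + b)./2 = a by lia.
    by rewrite e1 e2 addnC.
  + have := H_mono a (b.-1 - a) ha.
    have -> : a + (b.-1 - a) = b.-1 by lia.
    have -> : (b.-1).+1 = b by lia.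
    have := IH a.+1 b.-1 ltac:(lia) ltac:(lia) ltac:(lia).
    have -> : a.+1 + b.-1 = a + b by lia.
    lia.
Qed.

Lemma balance a b : 1 <= a -> 1 <= b ->
  H (uphalf (a + b)) + H (a + b)./2 <= H a + H b.
Proof.
move=> ha hb; case: (leqP a b) => h.
- exact: (balance_aux (b - a)).
- rewrite (addnC a b) (addnC (H a)); apply: (balance_aux (a - b)); lia.
Qed.

Lemma g_H n : 2 <= n -> g n = H (uphalf n) + H n./2.
Proof. move=> hn; rewrite g_eq // /H; lia. Qed.

Fixpoint cost T := match T with
  | Leaf _ => 0
  | Node L R => cost L + cost R + 'C(size (leaves L), 2) + 'C(size (leaves R), 2)
  end.

Lemma size_leaves_gt0 T : 0 < size (leaves T).
Proof. elim: T => //= L IL R IR; rewrite size_cat; lia. Qed.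

Lemma cost_lb T : g (size (leaves T)) <= cost T.
Proof.
elim: T => [l|L IL R IR] //=.
rewrite size_cat g_H; last by have := size_leaves_gt0 L; have := size_leaves_gt0 R; lia.
have := balance _ _ (size_leaves_gt0 L) (size_leaves_gt0 R).
rewrite /H. lia.
Qed.

Fixpoint mkf k lo n := if k is k'.+1 then
   (if n <= 1 then Leaf lo else Node (mkf k' lo (uphalf n)) (mkf k' (lo + uphalf n) n./2))
   else Leaf lo.

Lemma mkf_ok k lo n : 1 <= n -> n <= k ->
  leaves (mkf k lo n) = iota lo n /\ cost (mkf k lo n) = g n.
Proof.
elim: k lo n => [|k IH] lo n h1 h2; first lia.
rewrite /=; case: ifP => hn.
- by have -> : n = 1 by lia.
- move/negbT: hn; rewrite -ltnNge => hn. have [x [y z]] := hfacts n.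
  have u1 : 1 <= uphalf n by lia. have u2 : uphalf n <= k by lia.
  have [e1 c1] := IH lo (uphalf n) u1 u2.
  have v1 : 1 <= n./2 by lia. have v2 : n./2 <= k by lia.
  have [e2 c2] := IH (lo + uphalf n) n./2 v1 v2.
  rewrite /= e1 e2 c1 c2 !size_iota -iotaD (g_H n hn).
  split; first by congr iota; lia.
  rewrite /H; lia.
Qed.

Lemma phi0 T i j : (i \in leaves T) && (j \in leaves T) = false -> phi T i j = 0.
Proof.
elim: T => [l|L IL R IR] //= h.
rewrite !mem_cat in h.
case: ifP => hL; first by move: h hL; case: (i \in leaves L); case: (j \in leaves L);
  case: (i \in leaves R); case: (j \in leaves R).
case: ifP => hR //; by move: h hL hR; case: (i \in leaves L); case: (j \in leaves L);
  case: (i \in leaves R); case: (j \in leaves R).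
Qed.

Lemma phi_node L R i j : uniq (leaves L ++ leaves R) ->
  phi (Node L R) i j = phi L i j + phi R i j
     + ((i \in leaves L) && (j \in leaves L)) + ((i \in leaves R) && (j \in leaves R)).
Proof.
rewrite cat_uniq => /and3P [_ hd _].
have dis x : x \in leaves L -> x \in leaves R -> False.
  by move=> a b; move/hasP: hd; apply; exists x.
rewrite /=.
case hL: ((i \in leaves L) && (j \in leaves L)).
- case hR: ((i \in leaves R) && (j \in leaves R)).
  + by move/andP: hL => [a _]; move/andP: hR => [b _]; case: (dis i a b).
  + by rewrite (phi0 R i j hR); lia.
- case hR: ((i \in leaves R) && (j \in leaves R)).
  + by rewrite (phi0 L i j hL); lia.
  + by rewrite (phi0 L i j hL) (phi0 R i j hR).
Qed.

Definition PS (F : nat -> nat -> nat) N := \sum_(1 <= i < N.+1) \sum_(i.+1 <= j < N.+1) F i j.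

Lemma PS_S F N : PS F N.+1 = PS F N + \sum_(1 <= i < N.+1) F i N.+1.
Proof.
rewrite /PS big_nat_recr //= [X in _ + X]big_geq // addn0 -big_split /=.
apply: eq_big_nat => i /andP [h1 h2].
rewrite big_nat_recr //.
Qed.

Lemma PS_count (s : seq nat) N :
  PS (fun i j => (i \in s) && (j \in s)) N = 'C(count (mem s) (iota 1 N), 2).
Proof.
elim: N => [|N IH]; first by rewrite /PS big_geq.
have -> : iota 1 N.+1 = iota 1 N ++ [:: N.+1].
  by rewrite -(addn1 N) iotaD add1n addn1.
rewrite (PS_S (fun i j => nat_of_bool ((i \in s) && (j \in s))) N) IH count_cat /= addn0.
case hN: (N.+1 \in s) => /=.
- rewrite addn1 bin2S; congr (_ + _).
  rewrite -sum1_count big_mkcond /= /index_iota subn1 /=.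
  rewrite [RHS]big_mkcond; apply: eq_bigr => i _; rewrite andbT; by case: (i \in s).
- rewrite big1; first by rewrite /= !addn0.
  by move=> i _; rewrite andbF.
Qed.

Lemma count_size (s : seq nat) N : uniq s -> all (fun x => 0 < x <= N) s ->
  count (mem s) (iota 1 N) = size s.
Proof.
move=> us /allP hs; rewrite -size_filter; apply: perm_size.
apply: uniq_perm; first by apply: filter_uniq; apply: iota_uniq.
  by [].
move=> x; rewrite mem_filter mem_iota.
apply/idP/idP; first by case/and3P.
move=> hx; have /andP [a b] := hs x hx; apply/and3P; split => //; lia.
Qed.

Lemma PS_cost T N : uniq (leaves T) -> all (fun x => 0 < x <= N) (leaves T) ->
  PS (phi T) N = cost T.
Proof.
elim: T => [l|L IL R IR] /= hu ha.
- by rewrite /PS big1 // => i _; rewrite big1.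
- have hu' := hu; rewrite cat_uniq in hu'; move/and3P: hu' => [uL _ uR].
  rewrite all_cat in ha; move/andP: ha => [aL aR].
  have -> : PS (phi (Node L R)) N =
     PS (phi L) N + PS (phi R) N
     + PS (fun i j => (i \in leaves L) && (j \in leaves L)) N
     + PS (fun i j => (i \in leaves R) && (j \in leaves R)) N.
    rewrite /PS -!big_split /=; apply: eq_bigr => i _.
    rewrite -!big_split /=; apply: eq_bigr => j _.
    exact: phi_node.
  by rewrite IL // IR // !PS_count !count_size.
Qed.

Lemma Phi_cost n T : binary_phylo n T -> size (leaves T) = n /\ Phi T = cost T.
Proof.
move=> hp.
have hs : size (leaves T) = n by rewrite (perm_size hp) size_iota.
split => //.
rewrite /Phi -/(PS (phi T) (size (leaves T))) PS_cost //.
- by rewrite (perm_uniq hp) iota_uniq.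
- apply/allP => x; rewrite (perm_mem hp) mem_iota hs; lia.
Qed.

Lemma g_min n : 1 <= n -> is_min_Phi n (g n).
Proof.
move=> hn; split.
- have [e c] := mkf_ok n 1 n hn (leqnn n).
  have hp : binary_phylo n (mkf n 1 n) by rewrite /binary_phylo e.
  exists (mkf n 1 n); split => //.
  by have [_ ->] := Phi_cost n _ hp.
- move=> T hp; have [hs ->] := Phi_cost n T hp.
  by rewrite -hs; apply: cost_lb.
Qed.

Lemma f_eq_g f : (forall n, 1 <= n -> is_min_Phi n (f n)) -> forall n, 1 <= n -> f n = g n.
Proof.
move=> hf n hn.
have [[T [hT eT]] lbf] := hf n hn.
have [[T' [hT' eT']] lbg] := g_min n hn.
apply/eqP; rewrite eqn_leq; apply/andP; split.
- by rewrite -eT'; apply: lbf.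
- by rewrite -eT; apply: lbg.
Qed.

Theorem mainTheorem11 :
  (exists f : nat -> nat, forall n, 1 <= n -> is_min_Phi n (f n)) /\
  (forall f : nat -> nat, (forall n, 1 <= n -> is_min_Phi n (f n)) ->
     [/\ f 1 = 0, f 2 = 0 &
      forall n, 3 <= n ->
        f n = f (uphalf n) + f n./2 + 'C(uphalf n, 2) + 'C(n./2, 2)]).
Proof.
split; first by exists g; exact: g_min.
move=> f hf; have E := f_eq_g f hf.
split; first by rewrite E.
- by rewrite E.
move=> n hn; have [x [y z]] := hfacts n.
rewrite !E; try lia. by apply: g_eq; lia.
Qed.
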